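(* Let $P_1,\ldots,P_n$ be closed disks with centers $c_i$ and radii $\rho_i\ge0$, let $D_{ij}$ be the closed disk with center $c_i-c_j$ and radius $\rho_i+\rho_j$, $\mathcal{D}=\bigcup_{i,j}D_{ij}$, and let $A_{ij}$ be the Apollonius cell of $D_{ij}$ in the Apollonius diagram of $\{D_{ij}\}_{i,j=1}^n$. If an Apollonius edge $pq$ of $A_{ij}$ (with endpoints $p,q$) meets the circle $\partial D_{ij}$ at a point $x\ne p,q$, then there are points $x'$ on the edge $pq$ arbitrarily close to $x$ that are not contained in $\mathcal{D}$.
   Context: For a family of disks $D_k$ with centers $c_k$ and radii $\rho_k$, $\delta_k(x)=\|x-c_k\|-\rho_k$; the Apollonius cell of $D_k$ is $\{x\mid\delta_k(x)\le\delta_l(x)\text{ for all }l\}$; the one-dimensional connected sets of points belonging to exactly two cells are Apollonius edges. *)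

(* Defs.v *)
From HB Require Import structures.
From mathcomp Require Import all_boot all_order all_algebra.
From mathcomp Require Import all_classical all_reals all_analysis.
Set Implicit Arguments. Unset Strict Implicit. Unset Printing Implicit Defensive.
Import Order.TTheory GRing.Theory Num.Theory.
Import numFieldNormedType.Exports.
Local Open Scope classical_set_scope.
Local Open Scope ring_scope.

Section Apollonius.
Variable R : realType.
Notation pt := (R * R)%type.

Definition eucl_dist (x y : pt) : R :=
  Num.sqrt ((x.1 - y.1) ^+ 2 + (x.2 - y.2) ^+ 2).

Definition psub (x y : pt) : pt := (x.1 - y.1, x.2 - y.2).

Definition disk := (pt * R)%type.

Definition cdisk (D : disk) : set pt := [set x | eucl_dist x D.1 <= D.2].
Definition circle (D : disk) : set pt := [set x | eucl_dist x D.1 = D.2].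

Definition delta (D : disk) (x : pt) : R := eucl_dist x D.1 - D.2.

Definition apo_cell (F : set disk) (D : disk) : set pt :=
  [set x | forall E, F E -> delta D x <= delta E x].

Definition two_cell_points (F : set disk) : set pt :=
  [set x | exists D1 D2, [/\ F D1 /\ F D2, D1 <> D2, apo_cell F D1 x,
             apo_cell F D2 x &
             forall D, F D -> apo_cell F D x -> D = D1 \/ D = D2]].

(* The closed edge "pq" is gamma([0,1]). *)
Definition apo_edge (F : set disk) (D : disk) (gamma : R -> pt) (p q : pt) :=
  [/\ {within `[0%R, 1%R], continuous gamma},
      set_inj `[0%R, 1%R] gamma,
      gamma 0 = p /\ gamma 1 = q,
      gamma @` `]0%R, 1%R[ `<=` apo_cell F D &
      exists x0, two_cell_points F x0 /\
        connected_component (two_cell_points F) x0 = gamma @` `]0%R, 1%R[ ].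

Definition Dij (n : nat) (c : 'I_n -> pt) (rho : 'I_n -> R) (i j : 'I_n) : disk :=
  (psub (c i) (c j), rho i + rho j).

Definition Dfam (n : nat) (c : 'I_n -> pt) (rho : 'I_n -> R) : set disk :=
  [set D | exists i j, D = Dij c rho i j].

Definition Dunion (n : nat) (c : 'I_n -> pt) (rho : 'I_n -> R) : set pt :=
  [set x | exists i j, cdisk (Dij c rho i j) x].

End Apollonius.

(* Main.v *)
Require Import Defs.
From HB Require Import structures.
From mathcomp Require Import all_boot all_order all_algebra.
From mathcomp Require Import all_classical all_reals all_analysis.
From mathcomp Require Import ring lra.
Import Order.TTheory GRing.Theory Num.Theory.
Import numFieldNormedType.Exports.
Local Open Scope classical_set_scope.
Local Open Scope ring_scope.
Section S.
Variable R : realType.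

Lemma sq_cases (x y : R) : x ^+ 2 = y ^+ 2 -> x = y \/ x = - y.
Proof.
move=> h; have : (x - y) * (x + y) == 0 by apply/eqP; rewrite -[RHS](subrr (x ^+ 2)) {2}h; ring.
rewrite mulf_eq0 => /orP [] /eqP H; [left|right]; lra.
Qed.

Lemma cancel_d (d X Y : R) : 0 < d -> d * X = d * Y -> X = Y.
Proof. move=> d0; apply: mulfI; by rewrite gt_eqF. Qed.

Lemma core_col (d ax al b2 r s t : R) : 0 < d -> 0 <= r -> 0 <= s -> 0 <= t -> t <= r -> t <= s ->
  0 <= b2 ->
  ax ^+ 2 = r ^+ 2 * d ^+ 2 -> (ax - d ^+ 2) ^+ 2 = s ^+ 2 * d ^+ 2 ->
  al ^+ 2 + b2 = (r - t) ^+ 2 * d ^+ 2 -> (al - d ^+ 2) ^+ 2 + b2 = (s - t) ^+ 2 * d ^+ 2 ->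
  b2 = 0.
Proof.
move=> d0 r0 s0 t0 tr ts b0 hx1 hx2 hy1 hy2.
have d2 : 0 < d ^+ 2 by rewrite exprn_gt0.
have hal : 2 * al - d ^+ 2 = (r - s) * (r + s - 2 * t).
  apply: (@cancel_d (d ^+ 2) _ _ d2). nra.
have hax : 2 * ax - d ^+ 2 = (r - s) * (r + s).
  apply: (@cancel_d (d ^+ 2) _ _ d2). nra.
have [hx|hx] : ax = r * d \/ ax = - (r * d) by apply: sq_cases; rewrite hx1; ring.
- have [hx'|hx'] : ax - d ^+ 2 = s * d \/ ax - d ^+ 2 = - (s * d) by apply: sq_cases; rewrite hx2; ring.
  + have rE : r = s + d by apply: (@cancel_d d _ _ d0); nra.
    have alE : al = d * (r - t) by nra.
    nra.
  + have rsd : r + s = d by apply: (@cancel_d d _ _ d0); nra.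
    have sE : s = d - r by lra.
    have alE : al = d * (r + t) - 2 * r * t by rewrite sE in hal; nra.
    have bE : b2 = - 4 * t * s * r * (d - t) by rewrite sE; nra.
    have : 0 <= t * s * r * (d - t) by rewrite !mulr_ge0 //; lra.
    nra.
- have [hx'|hx'] : ax - d ^+ 2 = s * d \/ ax - d ^+ 2 = - (s * d) by apply: sq_cases; rewrite hx2; ring.
  + nra.
  + have rE : s = r + d by apply: (@cancel_d d _ _ d0); nra.
    have alE : al = d * (t - r) by nra.
    nra.
Qed.
Notation pt := (R * R)%type.
Definition bet (a b y : pt) : R := (b.1 - a.1) * (y.2 - a.2) - (b.2 - a.2) * (y.1 - a.1).

Lemma dist_sq (y c : pt) v : eucl_dist y c = v -> 0 <= v /\ (y.1-c.1)^+2 + (y.2-c.2)^+2 = v^+2.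
Proof.
rewrite /eucl_dist => <-; split; first exact: sqrtr_ge0.
rewrite sqr_sqrtr //; apply: addr_ge0; exact: sqr_ge0.
Qed.

Lemma key (a b x y z : pt) (r s : R) :
 a <> b -> eucl_dist x a = r -> eucl_dist x b = s ->
 eucl_dist y a - r = eucl_dist y b - s -> eucl_dist y a - r <= 0 ->
 eucl_dist z a - r = eucl_dist z b - s -> eucl_dist z a - r <= 0 ->
 eucl_dist y a = eucl_dist z a ->
 (bet a b x = 0 \/ 0 < bet a b y * bet a b z) -> y = z.
Proof.
move=> ab xa xb ye yle ze zle yz hc.
set t := r - eucl_dist y a.
have ya : eucl_dist y a = r - t by rewrite /t; ring.
have yb : eucl_dist y b = s - t by rewrite /t; lra.
have za : eucl_dist z a = r - t by rewrite -yz.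
have zb : eucl_dist z b = s - t by lra.
have t0 : 0 <= t by rewrite /t; lra.
clearbody t; clear ye yle ze zle yz.
move: ya yb za zb xa xb => /dist_sq [ya0 ya] /dist_sq [yb0 yb] /dist_sq [_ za] /dist_sq [_ zb]
  /dist_sq [r0 xa] /dist_sq [s0 xb].
move: hc ab ya yb za zb xa xb; rewrite /bet.
case: a => a1 a2; case: b => b1 b2; case: x => x1 x2; case: y => y1 y2; case: z => z1 z2 /=.
move=> hc ab ya yb za zb xa xb.
set u1 := b1 - a1; set u2 := b2 - a2.
have b1E : b1 = a1 + u1 by rewrite /u1; ring.
have b2E : b2 = a2 + u2 by rewrite /u2; ring.
rewrite b1E b2E in ya yb za zb xa xb.
have D0 : 0 < u1 ^+ 2 + u2 ^+ 2.
  have : u1 ^+ 2 + u2 ^+ 2 != 0.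
    apply/negP; rewrite paddr_eq0 ?sqr_ge0 // !sqrf_eq0 => /andP [/eqP h1 /eqP h2].
    apply: ab; congr (_, _); lra.
  have := addr_ge0 (sqr_ge0 u1) (sqr_ge0 u2). rewrite le_eqVlt eq_sym => /orP [/eqP -> | //]; by rewrite eqxx.
set D := u1 ^+ 2 + u2 ^+ 2.
set ay := (y1 - a1) * u1 + (y2 - a2) * u2.
set az := (z1 - a1) * u1 + (z2 - a2) * u2.
set by_ := u1 * (y2 - a2) - u2 * (y1 - a1).
set bz := u1 * (z2 - a2) - u2 * (z1 - a1).
have hay : 2 * ay - D = (r - t) ^+ 2 - (s - t) ^+ 2 by rewrite -ya -yb /ay /D; ring.
have haz : 2 * az - D = (r - t) ^+ 2 - (s - t) ^+ 2 by rewrite -za -zb /az /D; ring.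
have aeq : ay = az by lra.
have Ly : ay ^+ 2 + by_ ^+ 2 = (r - t) ^+ 2 * D by rewrite -ya /ay /by_ /D; ring.
have Lz : az ^+ 2 + bz ^+ 2 = (r - t) ^+ 2 * D by rewrite -za /az /bz /D; ring.
have Ly' : (ay - D) ^+ 2 + by_ ^+ 2 = (s - t) ^+ 2 * D by rewrite -yb /ay /by_ /D; ring.
have Lz' : (az - D) ^+ 2 + bz ^+ 2 = (s - t) ^+ 2 * D by rewrite -zb /az /bz /D; ring.
have beq : by_ = bz.
  case: hc => hc.
  - set d := Num.sqrt D.
    have d0 : 0 < d by rewrite sqrtr_gt0.
    have dD : D = d ^+ 2 by rewrite sqr_sqrtr // ltW.
    set ax := (x1 - a1) * u1 + (x2 - a2) * u2.
    have Lx : ax ^+ 2 = r ^+ 2 * d ^+ 2.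
      rewrite -dD -xa /ax /D. have : u1 * (x2 - a2) - u2 * (x1 - a1) = 0 by rewrite -hc.
      move=> h0; nra.
    have Lx' : (ax - d ^+ 2) ^+ 2 = s ^+ 2 * d ^+ 2.
      rewrite -dD -xb /ax /D. have : u1 * (x2 - a2) - u2 * (x1 - a1) = 0 by rewrite -hc.
      move=> h0; nra.
    have tr : t <= r by lra.
    have ts : t <= s by lra.
    rewrite dD in Ly Ly' Lz Lz'.
    have hy0 := @core_col d ax ay (by_ ^+ 2) r s t d0 r0 s0 t0 tr ts (sqr_ge0 by_) Lx Lx' Ly Ly'.
    have hz0 := @core_col d ax az (bz ^+ 2) r s t d0 r0 s0 t0 tr ts (sqr_ge0 bz) Lx Lx' Lz Lz'.
    move/eqP: hy0; rewrite sqrf_eq0 => /eqP ->; move/eqP: hz0; rewrite sqrf_eq0 => /eqP -> //.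
  - have : by_ ^+ 2 = bz ^+ 2 by rewrite aeq in Ly; lra.
    move=> h; have hc2 : 0 < by_ * bz by exact: hc. case: (@sq_cases by_ bz h) => // hb; rewrite hb in hc2; have := sqr_ge0 bz; nra.
have e1 : D * y1 = D * z1.
  have : D * (y1 - z1) = u1 * (ay - az) - u2 * (by_ - bz) by rewrite /D /ay /az /by_ /bz; ring.
  rewrite aeq beq !subrr !mulr0 subrr => h; lra.
have e2 : D * y2 = D * z2.
  have : D * (y2 - z2) = u2 * (ay - az) + u1 * (by_ - bz) by rewrite /D /ay /az /by_ /bz; ring.
  rewrite aeq beq !subrr !mulr0 addr0 => h; lra.
by rewrite (@cancel_d D y1 z1 D0 e1) (@cancel_d D y2 z2 D0 e2).
Qed.
Lemma fst_cont : continuous (fun p : R * R => p.1).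
Proof. move=> p. exact: cvg_fst. Qed.
Lemma snd_cont : continuous (fun p : R * R => p.2).
Proof. move=> p. exact: cvg_snd. Qed.
Lemma dist_cont (c : R * R) : continuous (fun p : R * R => eucl_dist p c).
Proof.
move=> p; rewrite /eucl_dist.
apply: continuous_comp; last exact: sqrt_continuous.
apply: cvgD; apply: cvgM; apply: cvgB; (try exact: fst_cont); (try exact: snd_cont); exact: cvg_cst.
Qed.
Lemma gam_cont (gamma : R -> R * R) : {within `[0%R, 1%R], continuous gamma} -> forall t : R, 0 < t < 1 -> {for t, continuous gamma}.
Proof.
move=> h.
have : {in `]0%R, 1%R[%classic, continuous gamma}.
  rewrite -(@continuous_open_subspace R _ `]0%R, 1%R[ gamma); last exact: interval_open.
  apply: continuous_subspaceW h; exact: subset_itv_oo_cc.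
move=> H t tin; apply: H; rewrite inE /=. by rewrite in_itv /=.
Qed.

Lemma delta_cont (G : disk R) : continuous (delta G).
Proof. move=> p; rewrite /delta; apply: cvgB; [exact: dist_cont | exact: cvg_cst]. Qed.

Lemma bet_cont (a b : pt) : continuous (bet a b).
Proof.
move=> p; rewrite /bet.
apply: cvgB; apply: cvgM; (try exact: cvg_cst); apply: cvgB; (try exact: cvg_cst);
  (try exact: fst_cont); exact: snd_cont.
Qed.

Lemma comp_cont (gamma : R -> pt) (h : pt -> R) (t : R) :
  {for t, continuous gamma} -> continuous h -> (fun s => h (gamma s)) @ t --> h (gamma t).
Proof. move=> gt hc; apply: (continuous_comp gt); exact: hc. Qed.

End S.
Lemma near_unit (R : realType) (t0 : R) : 0 < t0 < 1 -> \forall s \near t0, 0 < s < 1.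
Proof.
move=> t0i.
  have ci : (fun s : R => s) @ t0 --> t0 := cvg_id.
  case/andP: t0i => h0 h1.
  near=> s.
  apply/andP; split; near: s.
  exact: (cvgr_gt _ ci _ h0).
  exact: (cvgr_lt _ ci _ h1).
Unshelve. all: by end_near.
Qed.
Arguments key {R}. Arguments gam_cont {R}. Arguments comp_cont {R}. Arguments dist_cont {R}.
Arguments delta_cont {R}. Arguments bet_cont {R}. Arguments bet {R}.

Lemma ivt_contra (R : realType) (phi : R -> R) (t0 d r : R) : 0 < d -> phi t0 = r ->
  (forall s, s \in `[t0 - d, t0 + d] -> phi s <= r) ->
  (forall s, s \in `[t0 - d, t0 + d] -> {for s, continuous phi}) ->
  (forall s s', s \in `[t0 - d, t0 + d] -> s' \in `[t0 - d, t0 + d] -> phi s = phi s' -> s = s') ->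
  False.
Proof.
move=> d0 phit0 phile phic inj.
have inseg : forall s, t0 - d <= s <= t0 + d -> s \in `[t0 - d, t0 + d].
  by move=> s hs; rewrite in_itv /=.
have s1in : t0 - d / 2 \in `[t0 - d, t0 + d] by apply: inseg; apply/andP; split; lra.
have s2in : t0 + d / 2 \in `[t0 - d, t0 + d] by apply: inseg; apply/andP; split; lra.
have t0in' : t0 \in `[t0 - d, t0 + d] by apply: inseg; apply/andP; split; lra.
have lt1 : phi (t0 - d / 2) < r.
  rewrite lt_neqAle phile // andbT; apply/eqP => h.
  have := inj _ _ s1in t0in'; rewrite h phit0 => /(_ erefl); lra.
have lt2 : phi (t0 + d / 2) < r.
  rewrite lt_neqAle phile // andbT; apply/eqP => h.
  have := inj _ _ s2in t0in'; rewrite h phit0 => /(_ erefl); lra.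
have contw : forall u v, t0 - d <= u -> v <= t0 + d -> {within `[u, v], continuous phi}.
  move=> u v hu hv; apply: continuous_in_subspaceT => s.
  rewrite inE /= in_itv /= => /andP [h1 h2]; apply: phic; apply: inseg; apply/andP; split; lra.
case: (lerP (phi (t0 - d / 2)) (phi (t0 + d / 2))) => hle.
- have [c0 hc0 hphi] : exists2 c0, c0 \in `[t0 - d / 2, t0] & phi c0 = phi (t0 + d / 2).
    apply: IVT; first lra.
    + apply: contw; lra.
    + rewrite phit0 min_l ?max_r; [apply/andP; split; lra | lra | lra].
  move: hc0; rewrite in_itv /= => /andP [h1 h2].
  have := inj _ _ (inseg c0 _) s2in hphi.
  have hh : t0 - d <= c0 <= t0 + d by apply/andP; split; lra.
  move=> /(_ hh); lra.
- have [c0 hc0 hphi] : exists2 c0, c0 \in `[t0, t0 + d / 2] & phi c0 = phi (t0 - d / 2).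
    apply: IVT; first lra.
    + apply: contw; lra.
    + rewrite phit0 min_r ?max_l; [apply/andP; split; lra | lra | lra].
  move: hc0; rewrite in_itv /= => /andP [h1 h2].
  have := inj _ _ (inseg c0 _) s1in hphi.
  have hh : t0 - d <= c0 <= t0 + d by apply/andP; split; lra.
  move=> /(_ hh); lra.
Qed.

Theorem proposition13 (R : realType) (n : nat) (c : 'I_n -> (R * R)%type)
  (rho : 'I_n -> R) (hrho : forall i, 0 <= rho i) (i j : 'I_n)
  (gamma : R -> (R * R)%type) (p q x : (R * R)%type) :
  apo_edge (Dfam c rho) (Dij c rho i j) gamma p q ->
  (gamma @` `[0%R, 1%R]) x ->
  circle (Dij c rho i j) x ->
  x <> p -> x <> q ->
  forall e : R, 0 < e ->
    exists x', [/\ (gamma @` `[0%R, 1%R]) x', eucl_dist x' x < e &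
                   ~ Dunion c rho x'].
Proof.
move=> [gc ginj [g0 g1] garc [x0 [tcp0 cc]]] [t0 t0in gx] xcirc xp xq e e0.
set F := Dfam c rho. set D := Dij c rho i j.
have FD : F D by exists i, j.
have t0i : 0 < t0 < 1.
  move: t0in; rewrite /= in_itv /= => /andP [h0 h1].
  rewrite !lt_neqAle h0 h1 !andbT; apply/andP; split; apply/eqP => h.
  - by apply: xp; rewrite -gx -h.
  - by apply: xq; rewrite -gx h.
have arc : forall s, 0 < s < 1 -> two_cell_points F (gamma s) /\ apo_cell F D (gamma s).
  move=> s si; have hs : (gamma @` `]0%R, 1%R[) (gamma s) by exists s => //; rewrite /= in_itv /=.
  split; last exact: garc.
  by apply: (@connected_component_sub _ _ x0); rewrite cc.
have xA : apo_cell F D x by rewrite -gx; exact: (arc t0 t0i).2.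
have [E [FE ED xE Ecov]] : exists E, [/\ F E, E <> D, apo_cell F E x &
    forall G, F G -> apo_cell F G x -> G = D \/ G = E].
  have := (arc t0 t0i).1; rewrite gx => -[D1 [D2 [[F1 F2] n12 A1 A2 cov]]].
  case: (cov D FD xA) => HD.
  - exists D2; split => //; first by rewrite HD => h; apply: n12.
    by rewrite HD.
  - exists D1; split => //; first by rewrite HD.
    by move=> G FG AG; case: (cov G FG AG) => ->; [right|left].
have dDx : delta D x = 0 by rewrite /delta xcirc subrr.
have dEx : delta E x = 0.
  have h1 := xE D FD; have h2 := xA E FE; lra.
apply: contrapT => Hn.
have Hall : forall s, 0 < s < 1 -> eucl_dist (gamma s) x < e -> Dunion c rho (gamma s).
  move=> s /andP [s0 s1] sd; apply: contrapT => nD; apply: Hn; exists (gamma s); split => //.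
  by exists s => //; rewrite /= in_itv /= !ltW.
have gct := gam_cont gamma gc t0 t0i.
set a := D.1. set b := E.1.
have N1 : \forall s \near t0, 0 < s < 1.
  exact: near_unit.
have N2 : \forall s \near t0, eucl_dist (gamma s) x < e.
  apply: (cvgr_lt _ (comp_cont gamma (fun y => eucl_dist y x) t0 gct (dist_cont x))).
  by rewrite gx /eucl_dist !subrr expr0n /= addr0 sqrtr0.
have N3 : \forall s \near t0, forall kl : 'I_n * 'I_n,
    apo_cell F (Dij c rho kl.1 kl.2) x \/ ~ apo_cell F (Dij c rho kl.1 kl.2) (gamma s).
  apply: (filter_forall (F := nbhs t0) (f := fun kl s => apo_cell F (Dij c rho kl.1 kl.2) x \/
     ~ apo_cell F (Dij c rho kl.1 kl.2) (gamma s))) => -[k l] /=.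
  case: (pselect (apo_cell F (Dij c rho k l) x)) => hA.
  - by near=> s; left.
  - have [H [FH ltH]] : exists H, F H /\ delta H x < delta (Dij c rho k l) x.
      apply: contrapT => nex; apply: hA => H FH; rewrite leNgt; apply/negP => lt.
      by apply: nex; exists H.
    have hc : continuous (fun y => delta (Dij c rho k l) y - delta H y).
      by move=> y; apply: cvgB; apply: delta_cont.
    have cv := comp_cont gamma (fun y => delta (Dij c rho k l) y - delta H y) t0 gct hc.
    have hpos : 0 < delta (Dij c rho k l) (gamma t0) - delta H (gamma t0) by rewrite gx subr_gt0.
    near=> s; right => hA'; have := hA' H FH.
    suff : 0 < delta (Dij c rho k l) (gamma s) - delta H (gamma s) by lra.
    near: s; exact: (cvgr_gt _ cv 0 hpos).
have N4 : \forall s \near t0, bet a b x = 0 \/ 0 < bet a b (gamma s) * bet a b x.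
  case: (eqVneq (bet a b x) 0) => hb.
  - by near=> s; left.
  - have hc : continuous (fun y => bet a b y * bet a b x).
      by move=> y; apply: cvgM; [exact: bet_cont | exact: cvg_cst].
    have cv := comp_cont gamma (fun y => bet a b y * bet a b x) t0 gct hc.
    have hpos : 0 < bet a b (gamma t0) * bet a b x.
      by rewrite gx -expr2 lt_def sqr_ge0 andbT sqrf_eq0 hb.
    near=> s; right.
    near: s; exact: (cvgr_gt _ cv 0 hpos).
have HN : \forall s \near t0, [/\ 0 < s < 1, eucl_dist (gamma s) x < e,
    (forall kl : 'I_n * 'I_n, apo_cell F (Dij c rho kl.1 kl.2) x \/
       ~ apo_cell F (Dij c rho kl.1 kl.2) (gamma s)) &
    (bet a b x = 0 \/ 0 < bet a b (gamma s) * bet a b x)].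
  by near=> s; split; near: s; [exact: N1 | exact: N2 | exact: N3 | exact: N4].
have H2 := (at_right_in_segment t0 _).2 HN.
have [d [d0 Hd]] := filter_ex (filterI (nbhs_right_gt 0) H2).
have Sfact : forall s, s \in `[t0 - d, t0 + d] ->
    [/\ 0 < s < 1, delta D (gamma s) = delta E (gamma s), delta D (gamma s) <= 0 &
        (bet a b x = 0 \/ 0 < bet a b (gamma s) * bet a b x)].
  move=> s /Hd [si sd sc sb].
  have [tc AD] := arc s si.
  have AE : apo_cell F E (gamma s).
    case: tc => [D1 [D2 [[F1 F2] n12 A1 A2 _]]].
    have [G [FG GD AG]] : exists G, [/\ F G, G <> D & apo_cell F G (gamma s)].
      case: (pselect (D1 = D)) => h1.
      - exists D2; split => // h; apply: n12; by rewrite h1 h.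
      - by exists D1.
    have FG' := FG.
    case: FG' => [k [l Gkl]]. case: (sc (k, l)) => /= h.
    - rewrite -Gkl in h. by case: (Ecov G FG h) => // <-.
    - by exfalso; apply: h; rewrite -Gkl.
  have eqDE : delta D (gamma s) = delta E (gamma s).
    have := AD E FE; have := AE D FD; lra.
  split => //.
  have [k [l hkl]] := Hall s si sd.
  have Fkl : F (Dij c rho k l) by exists k, l.
  have := AD _ Fkl; rewrite /delta; move: hkl; rewrite /cdisk /=; lra.
have xa : eucl_dist x a = D.2 by exact: xcirc.
have xb : eucl_dist x b = E.2 by move: dEx; rewrite /delta; lra.
have ab : a <> b.
  move=> hab; apply: ED.
  have h2 : E.2 = D.2 by rewrite -xa -xb hab.
  by rewrite [E]surjective_pairing [D]surjective_pairing -/a -/b hab h2.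
have inj : forall s s', s \in `[t0 - d, t0 + d] -> s' \in `[t0 - d, t0 + d] ->
    eucl_dist (gamma s) a = eucl_dist (gamma s') a -> s = s'.
  move=> s s' hs hs' he.
  have [si e1 l1 b1] := Sfact s hs; have [si' e1' l1' b1'] := Sfact s' hs'.
  have g : gamma s = gamma s'.
    apply: (key a b x (gamma s) (gamma s') D.2 E.2) => //.
    case: b1 => [h|h]; first by left.
    case: b1' => [h'|h']; first by left.
    right; have := mulr_gt0 h h'; have := sqr_ge0 (bet a b x); nra.
  apply: ginj => //; rewrite inE /= in_itv /=.
  - by case/andP: si => h0 h1; rewrite !ltW.
  - by case/andP: si' => h0 h1; rewrite !ltW.
set phi := fun s => eucl_dist (gamma s) a.
have phit0 : phi t0 = D.2 by rewrite /phi gx.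
have phile : forall s, s \in `[t0 - d, t0 + d] -> phi s <= D.2.
  move=> s /Sfact [_ _ h _]; move: h; rewrite /delta /phi; lra.
have phic : forall s, s \in `[t0 - d, t0 + d] -> {for s, continuous phi}.
  move=> s /Sfact [si _ _ _].
  exact: (comp_cont gamma (fun y => eucl_dist y a) s (gam_cont gamma gc s si) (dist_cont a)).
exact: (@ivt_contra R phi t0 d D.2 d0 phit0 phile phic inj).
Unshelve. all: by end_near.
Qed.
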